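(* Let $\mathcal{S}$ be the subdistribution monad, $\mathcal{S}(X)=\{p\colon X\to[0,1]\mid\sum_{x\in X}p(x)\le 1\}$ (unit: Dirac distributions; multiplication $\mu(P)(x)=\sum_{\nu}P(\nu)\nu(x)$), let $\mathcal{V}=[0,\infty]_+$, and let $\mathit{ev}_{\mathcal{S}}=\mathbb{E}\colon\mathcal{S}[0,\infty]\to[0,\infty]$, $\mathbb{E}(p)=\sum_{v}v\cdot p(v)$, with the convention $r\cdot\infty=\infty$ if $r>0$ and $0\cdot\infty=0$. For sets $X_1,X_2$ define $g_{X_1,X_2}\colon\mathcal{S}(X_1+X_2)\to\mathcal{S}X_1+\mathcal{S}X_2$ by $g_{X_1,X_2}(p)=p|_{X_1}$ (in the left summand) if $\mathrm{supp}(p)\cap X_1\neq\emptyset$, and $g_{X_1,X_2}(p)=p|_{X_2}$ (in the right summand) otherwise, where $\mathrm{supp}(p)=\{x\mid p(x)\neq0\}$. Then $g$ is a natural transformation that is compatible with the unit and the multiplication of $\mathcal{S}$ and is well-behaved with respect to $\mathbb{E}$.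
   Context: $[0,\infty]_+$ is the quantale on $[0,\infty]$ with the reversed order ($a\sqsubseteq b$ iff $a\ge b$) and extended addition as monoid operation; hence its top element is $\top=0$ and its bottom is $\bot=\infty$. For a monad $(T,\eta,\mu)$, a natural transformation $g\colon T((-)+(-))\Rightarrow T(-)+T(-)$ is compatible with the unit if $g_{Y_1,Y_2}\circ\eta_{Y_1+Y_2}=\eta_{Y_1}+\eta_{Y_2}$, and with the multiplication if $g_{Y_1,Y_2}\circ\mu_{Y_1+Y_2}=(\mu_{Y_1}+\mu_{Y_2})\circ g_{TY_1,TY_2}\circ Tg_{Y_1,Y_2}$, for all sets $Y_1,Y_2$. It is well-behaved with respect to $\mathit{ev}_T\colon T\mathcal{V}\to\mathcal{V}$ if for all sets $X_1,X_2$ and maps $f_i\colon X_i\to\mathcal{V}$: $\mathit{ev}_T\circ T[f_1,\top_{X_2}]=[\mathit{ev}_T\circ Tf_1,\top_{TX_2}]\circ g_{X_1,X_2}$, $\mathit{ev}_T\circ T[\bot_{X_1},f_2]=[\bot_{TX_1},\mathit{ev}_T\circ Tf_2]\circ g_{X_1,X_2}$, and $\mathit{ev}_T\circ T[\bot_{X_1},\top_{X_2}]=[\bot_{TX_1},\top_{TX_2}]\circ g_{X_1,X_2}$, where $\top_Z,\bot_Z$ are constant maps on $Z$ with values $\top,\bot$ of the quantale. *)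

(* Defs.v *)
From HB Require Import structures.
From mathcomp Require Import all_boot all_order all_algebra.
From mathcomp Require Import boolp classical_sets functions reals constructive_ereal ereal esum.
Set Implicit Arguments. Unset Strict Implicit. Unset Printing Implicit Defensive.
Import Order.TTheory GRing.Theory Num.Theory.
Local Open Scope classical_set_scope.
Local Open Scope ring_scope.
Local Open Scope ereal_scope.

Section Subdist.
Variable R : realType.

Definition ssum (T : Type) (a : T -> \bar R) : \bar R :=
  \esum_(x in [set: {classic T}]) a x.

Definition is_subdist (X : Type) (p : X -> \bar R) : Prop :=
  (forall x, 0 <= p x /\ p x <= 1) /\ ssum p <= 1.

Record subdist (X : Type) := Subdist { sd :> X -> \bar R ; sdP : is_subdist sd }.

Lemma is_subdist0 (X : Type) : is_subdist (fun _ : X => 0).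
Proof.
split; first by move=> x; rewrite lexx lee01.
by rewrite /ssum esum1 ?lee01.
Qed.

Definition subdist0 (X : Type) : subdist X := Subdist (@is_subdist0 X).

(* Packages p as a subdistribution; every use below is on a p which is
   (mathematically) a subdistribution, so the fallback is never taken. *)
Definition mkS (X : Type) (p : X -> \bar R) : subdist X :=
  match pselect (is_subdist p) with
  | left h => Subdist h
  | right _ => subdist0 X
  end.

Definition etaS (X : Type) (x : X) : subdist X :=
  mkS (fun y => (`[< y = x >]%:R)%:E).

Definition mapS (X Y : Type) (f : X -> Y) (p : subdist X) : subdist Y :=
  mkS (fun y => ssum (fun x => if `[< f x = y >] then p x else 0)).

Definition muS (X : Type) (P : subdist (subdist X)) : subdist X :=
  mkS (fun x => ssum (fun nu : subdist X => P nu * nu x)).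

Definition summap (A B C D : Type) (f1 : A -> C) (f2 : B -> D) (z : A + B) : C + D :=
  match z with inl a => inl (f1 a) | inr b => inr (f2 b) end.

Definition copair (A B C : Type) (h1 : A -> C) (h2 : B -> C) (z : A + B) : C :=
  match z with inl a => h1 a | inr b => h2 b end.

Definition resl (X1 X2 : Type) (p : subdist (X1 + X2)) : subdist X1 :=
  mkS (fun x1 => p (inl x1)).
Definition resr (X1 X2 : Type) (p : subdist (X1 + X2)) : subdist X2 :=
  mkS (fun x2 => p (inr x2)).

Definition gS (X1 X2 : Type) (p : subdist (X1 + X2)) : subdist X1 + subdist X2 :=
  if `[< exists x1 : X1, p (inl x1) != 0 >] then inl (resl p) else inr (resr p).

(* the quantale V = [0,oo]_+ : top = 0, bottom = +oo *)
Definition V := {x : \bar R | 0 <= x}.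
Definition vtop : V := exist (fun x : \bar R => 0 <= x) 0 (lexx 0).
Definition vbot : V := exist (fun x : \bar R => 0 <= x) +oo (leey 0).

Lemma ev_ge0 (p : subdist V) : 0 <= ssum (fun v : V => proj1_sig v * p v).
Proof.
apply: esum_ge0 => v _; apply: mule_ge0; first exact: (proj2_sig v).
by case: (sdP p) => /(_ v) [].
Qed.

(* ev_S = E : S[0,oo] -> [0,oo], E(p) = sum_v v * p(v)  (0 * oo = 0) *)
Definition evS (p : subdist V) : V :=
  exist (fun x : \bar R => 0 <= x) _ (ev_ge0 p).

End Subdist.

(* Main.v *)
Require Import Defs.
From HB Require Import structures.
From mathcomp Require Import all_boot all_order all_algebra.
From mathcomp Require Import boolp classical_sets functions reals constructive_ereal ereal esum.

Set Implicit Arguments. Unset Strict Implicit. Unset Printing Implicit Defensive.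
Import Order.TTheory GRing.Theory Num.Theory.

Section H.
Local Open Scope classical_set_scope.
Local Open Scope ring_scope.
Local Open Scope ereal_scope.
Variable R : realType.
Implicit Types (c : \bar R).

Lemma ssum_ge0 (T : Type) (a : T -> \bar R) : (forall x, 0 <= a x) -> 0 <= ssum a.
Proof. by move=> h; apply: esum_ge0 => x _. Qed.

Lemma ssum_ge (T : Type) (a : T -> \bar R) x : (forall x, 0 <= a x) -> a x <= ssum a.
Proof.
move=> h; rewrite /ssum.
rewrite -(@esum_set1 R {classic T} x a) //.
rewrite (esum_mkcond [set x : {classic T}]); apply: le_esum => i _.
by case: ifP => // _; apply: h.
Qed.

Lemma ssum0 (T : Type) (a : T -> \bar R) : (forall x, a x = 0) -> ssum a = 0.
Proof. by move=> h; rewrite /ssum esum1. Qed.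

Lemma ssum_neq0 (T : Type) (a : T -> \bar R) : (forall x, 0 <= a x) ->
  ssum a != 0 <-> exists x, a x != 0.
Proof.
move=> h; split.
  move=> H; case: (pselect (exists x, a x != 0)) => // N; exfalso.
  move/eqP: H; apply; apply: ssum0 => x.
  by apply/eqP/negPn/negP => hx; apply: N; exists x.
move=> [x hx]; rewrite neq_lt; apply/orP; right.
apply: (lt_le_trans _ (ssum_ge x h)).
by rewrite lt_neqAle eq_sym hx h.
Qed.

Lemma ssum_point (T : Type) (x0 : T) c : 0 <= c ->
  ssum (fun y : T => if `[< y = x0 >] then c else 0) = c.
Proof.
move=> c0; rewrite /ssum.
rewrite -[RHS](@esum_set1 R {classic T} x0 (fun _ => c)) //.
rewrite [RHS](esum_mkcond [set x0 : {classic T}]); apply: eq_esum => i _.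
case: asboolP => [->|N]; first by rewrite mem_set.
by rewrite memNset.
Qed.

Lemma ssum_fubini (T1 T2 : Type) (a : T1 -> T2 -> \bar R) : (forall i j, 0 <= a i j) ->
  ssum (fun i => ssum (fun j => a i j)) = ssum (fun j => ssum (fun i => a i j)).
Proof.
move=> h; rewrite /ssum.
rewrite (@esum_esum R {classic T1} {classic T2}) //.
rewrite (@esum_esum R {classic T2} {classic T1}) //.
rewrite (reindex_esum ([set: {classic T2}] `*`` (fun=> [set: {classic T1}])) _ (fun x => (x.2, x.1)))//.
split=> //=.
- by move=> [i1 i2] [j1 j2] /= _ _ [] -> ->.
- by move=> [i1 i2] [Pi1 Qi2] /=; exists (i2, i1).
Qed.

Lemma ssum_split (X1 X2 : Type) (b : X1 + X2 -> \bar R) : (forall x, 0 <= b x) ->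
  ssum b = ssum (fun x1 => b (inl x1)) + ssum (fun x2 => b (inr x2)).
Proof.
move=> h; rewrite /ssum.
pose il := (@inl X1 X2 : {classic X1} -> {classic (X1+X2)}).
pose ir := (@inr X1 X2 : {classic X2} -> {classic (X1+X2)}).
rewrite (esumID (range (@inl X1 X2) : set {classic (X1+X2)})) //.
have -> : [set: {classic (X1+X2)}] `&` range inl = il @` [set: {classic X1}].
  by rewrite setTI.
have -> : [set: {classic (X1+X2)}] `&` ~` range inl = ir @` [set: {classic X2}].
  rewrite setTI; apply/seteqP; split => [[x1|x2]|z] /=.
  - by move=> H; exfalso; apply: H; exists x1.
  - by move=> _; exists x2.
  - by move=> [x2 _ <-] [x1 _].
rewrite (esum_image _ il); last by move=> ? ? _ _ [].
rewrite (esum_image _ ir) //; by move=> ? ? _ _ [].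
Qed.


Lemma ssum_point' (T : Type) (x0 : T) c : 0 <= c ->
  ssum (fun y : T => if `[< x0 = y >] then c else 0) = c.
Proof.
move=> c0; rewrite -[RHS](ssum_point x0 c0); congr ssum; apply: funext => y.
case: (pselect (y = x0)) => [->|N]; first by rewrite !asboolT.
by rewrite !asboolF // => /esym.
Qed.

Lemma ssumZl_le (T : Type) (a : T -> \bar R) c : 0 <= c -> (forall i, 0 <= a i) ->
  ssum (fun i => c * a i) <= c * ssum a.
Proof.
move=> c0 h; rewrite /ssum [X in _ <= _ * X]/esum /esum.
apply: ge_ereal_sup => _ [X HX <-]; rewrite -ge0_mule_fsumr //.
apply: lee_wpmul2l => //; apply: ereal_sup_ubound; by exists X.
Qed.

Lemma ssumZl (T : Type) (a : T -> \bar R) (r : R) : (0 <= r)%R -> (forall i, 0 <= a i) ->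
  ssum (fun i => r%:E * a i) = r%:E * ssum a.
Proof.
move=> r0 h; have [->|rn0] := eqVneq r 0%R.
  by rewrite mul0e; apply: ssum0 => i; rewrite mul0e.
apply/eqP; rewrite eq_le ssumZl_le ?lee_fin //=.
have -> : ssum a = ssum (fun i => (r^-1)%:E * (r%:E * a i)).
  congr ssum; apply: funext => i; rewrite muleA -EFinM mulVf // mul1e //.
rewrite (le_trans (lee_wpmul2l _ (ssumZl_le _ _))) ?lee_fin ?invr_ge0 //.
- by move=> i; apply: mule_ge0; rewrite ?lee_fin.
- by rewrite muleA -EFinM mulfV // mul1e.
Qed.

Lemma ssumZr (T : Type) (a : T -> \bar R) (r : R) : (0 <= r)%R -> (forall i, 0 <= a i) ->
  ssum (fun i => a i * r%:E) = ssum a * r%:E.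
Proof.
move=> r0 h; rewrite muleC -ssumZl //; congr ssum; apply: funext => i; exact: muleC.
Qed.

Lemma subdist_ext (X : Type) (p q : subdist R X) : (forall x, p x = q x) -> p = q.
Proof.
case: p => p hp; case: q => q hq /= e.
have epq : p = q by apply: funext.
subst q; congr Subdist; exact: Prop_irrelevance.
Qed.

Lemma sd_ge0 (X : Type) (p : subdist R X) x : 0 <= p x.
Proof. by case: (sdP p) => /(_ x) []. Qed.
Lemma sd_le1 (X : Type) (p : subdist R X) x : p x <= 1.
Proof. by case: (sdP p) => /(_ x) []. Qed.
Lemma sd_sum (X : Type) (p : subdist R X) : ssum p <= 1.
Proof. by case: (sdP p). Qed.
Lemma sd_fin (X : Type) (p : subdist R X) x : p x = (fine (p x))%:E.
Proof.
have h0 := sd_ge0 p x; have h1 := sd_le1 p x.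
by move: h0 h1; case: (p x).
Qed.

Lemma is_subdistI (X : Type) (a : X -> \bar R) :
  (forall x, 0 <= a x) -> ssum a <= 1 -> is_subdist a.
Proof.
move=> h s; split => // x; split => //; exact: le_trans (ssum_ge x h) s.
Qed.

Lemma mkSE (X : Type) (a : X -> \bar R) : is_subdist a -> forall x, mkS a x = a x.
Proof. by move=> h x; rewrite /mkS; case: pselect. Qed.

Lemma ssum_partition (X Y : Type) (f : X -> Y) (a : X -> \bar R) : (forall x, 0 <= a x) ->
  ssum (fun y => ssum (fun x => if `[< f x = y >] then a x else 0)) = ssum a.
Proof.
move=> h; rewrite ssum_fubini; last by move=> *; case: ifP.
by congr ssum; apply: funext => x; rewrite ssum_point'.
Qed.

Lemma mapS_E (X Y : Type) (f : X -> Y) (p : subdist R X) y :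
  mapS f p y = ssum (fun x => if `[< f x = y >] then p x else 0).
Proof.
rewrite mkSE //; apply: is_subdistI.
  by move=> y'; apply: ssum_ge0 => x; case: ifP => // _; apply: sd_ge0.
by rewrite ssum_partition; [apply: sd_sum | apply: sd_ge0].
Qed.

Lemma etaS_E (X : Type) (x y : X) : etaS R x y = if `[< y = x >] then 1 else 0.
Proof.
have E : (fun y => ((`[< y = x >])%:R)%:E) = (fun y : X => if `[< y = x >] then 1 else 0 : \bar R).
  by apply: funext => z; case: ifP.
rewrite /etaS E mkSE //; apply: is_subdistI.
  by move=> z; case: ifP.
by rewrite ssum_point.
Qed.

Lemma muS_E (X : Type) (P : subdist R (subdist R X)) x :
  muS P x = ssum (fun nu : subdist R X => P nu * nu x).
Proof.
rewrite mkSE //; apply: is_subdistI.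
  by move=> z; apply: ssum_ge0 => nu; apply: mule_ge0; apply: sd_ge0.
rewrite ssum_fubini; last by move=> *; apply: mule_ge0; apply: sd_ge0.
apply: le_trans (sd_sum P); apply: le_esum => nu _.
apply: le_trans (@ssumZl_le _ (fun x => nu x) (P nu) (sd_ge0 P nu) (sd_ge0 nu)) _.
by rewrite -[leRHS]mule1; apply: lee_wpmul2l; [apply: sd_ge0 | apply: sd_sum].
Qed.

Lemma resl_E (X1 X2 : Type) (p : subdist R (X1 + X2)) x : resl p x = p (inl x).
Proof.
rewrite mkSE //; apply: is_subdistI => [y|]; first exact: sd_ge0.
apply: le_trans (sd_sum p); rewrite [leRHS]ssum_split; last exact: sd_ge0.
by rewrite leeDl //; apply: ssum_ge0 => ?; apply: sd_ge0.
Qed.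

Lemma resr_E (X1 X2 : Type) (p : subdist R (X1 + X2)) x : resr p x = p (inr x).
Proof.
rewrite mkSE //; apply: is_subdistI => [y|]; first exact: sd_ge0.
apply: le_trans (sd_sum p); rewrite [leRHS]ssum_split; last exact: sd_ge0.
by rewrite leeDr //; apply: ssum_ge0 => ?; apply: sd_ge0.
Qed.


Lemma asbool_iff (P Q : Prop) : (P <-> Q) -> `[< P >] = `[< Q >].
Proof. by move=> [h1 h2]; apply/idP/idP => /asboolP H; apply/asboolP; auto. Qed.

Lemma ssum_dep_point (T : Type) (x0 : T) (F : T -> \bar R) : 0 <= F x0 ->
  ssum (fun y => if `[< x0 = y >] then F y else 0) = F x0.
Proof.
move=> h; rewrite -[RHS](ssum_point' x0 h); congr ssum; apply: funext => y.
by case: asboolP => // <-.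
Qed.

Lemma not_ex_neq (T : Type) (a : T -> \bar R) : ~ (exists x, a x != 0) -> forall x, a x = 0.
Proof. by move=> N x; apply/eqP/negPn/negP => hx; apply: N; exists x. Qed.

Lemma gS_l (X1 X2 : Type) (p : subdist R (X1 + X2)) :
  (exists x1, p (inl x1) != 0) -> gS p = inl (resl p).
Proof. by move=> H; rewrite /gS asboolT. Qed.

Lemma gS_r (X1 X2 : Type) (p : subdist R (X1 + X2)) :
  ~ (exists x1, p (inl x1) != 0) -> gS p = inr (resr p).
Proof. by move=> H; rewrite /gS asboolF. Qed.

Lemma nat_mass_l (X1 X2 Y1 Y2 : Type) (f1 : X1 -> Y1) (f2 : X2 -> Y2) (p : subdist R (X1 + X2)) y1 :
  mapS (summap f1 f2) p (inl y1) = mapS f1 (resl p) y1.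
Proof.
rewrite !mapS_E ssum_split; last by move=> x; case: ifP => // _; apply: sd_ge0.
rewrite [X in _ + X]ssum0 ?adde0 /=; last by move=> x2; rewrite asboolF.
congr ssum; apply: funext => x1; rewrite resl_E.
by rewrite (@asbool_iff (inl (f1 x1) = inl y1) (f1 x1 = y1)) //; split => [[]|->].
Qed.

Lemma nat_mass_r (X1 X2 Y1 Y2 : Type) (f1 : X1 -> Y1) (f2 : X2 -> Y2) (p : subdist R (X1 + X2)) y2 :
  mapS (summap f1 f2) p (inr y2) = mapS f2 (resr p) y2.
Proof.
rewrite !mapS_E ssum_split; last by move=> x; case: ifP => // _; apply: sd_ge0.
rewrite [X in X + _]ssum0 ?add0e /=; last by move=> x1; rewrite asboolF.
congr ssum; apply: funext => x2; rewrite resr_E.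
by rewrite (@asbool_iff (inr (f2 x2) = inr y2) (f2 x2 = y2)) //; split => [[]|->].
Qed.

Lemma part1 (X1 X2 Y1 Y2 : Type) (f1 : X1 -> Y1) (f2 : X2 -> Y2) (p : subdist R (X1 + X2)) :
  gS (mapS (summap f1 f2) p) = summap (@mapS R _ _ f1) (@mapS R _ _ f2) (gS p).
Proof.
have cond : (exists y1, mapS (summap f1 f2) p (inl y1) != 0) <-> (exists x1, p (inl x1) != 0).
  split.
    move=> [y1]; rewrite nat_mass_l mapS_E => /ssum_neq0 [].
      by move=> x; case: ifP => // _; apply: sd_ge0.
    by move=> x1; case: ifP => [_|]; [rewrite resl_E => h; exists x1 | rewrite eqxx].
  move=> [x1 hx]; exists (f1 x1); rewrite nat_mass_l mapS_E; apply/ssum_neq0.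
    by move=> x; case: ifP => // _; apply: sd_ge0.
  by exists x1; rewrite asboolT // resl_E.
case: (pselect (exists x1, p (inl x1) != 0)) => H.
  rewrite (gS_l H) (@gS_l _ _ (mapS (summap f1 f2) p)); last by apply/cond.
  by congr inl; apply: subdist_ext => y1; rewrite resl_E nat_mass_l.
rewrite (gS_r H) (@gS_r _ _ (mapS (summap f1 f2) p)); last by move/cond.
by congr inr; apply: subdist_ext => y2; rewrite resr_E nat_mass_r.
Qed.

Lemma part2 (Y1 Y2 : Type) (y : Y1 + Y2) :
  gS (@etaS R _ y) = summap (@etaS R Y1) (@etaS R Y2) y.
Proof.
case: y => [y1|y2].
  rewrite gS_l; last by exists y1; rewrite etaS_E asboolT // oner_neq0.
  congr inl; apply: subdist_ext => x; rewrite resl_E !etaS_E.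
  by rewrite (@asbool_iff (inl x = inl y1) (x = y1)) //; split => [[]|->].
rewrite gS_r; last by move=> [x1]; rewrite etaS_E asboolF ?eqxx.
congr inr; apply: subdist_ext => x; rewrite resr_E !etaS_E.
by rewrite (@asbool_iff (inr x = inr y2) (x = y2)) //; split => [[]|->].
Qed.


Lemma gS_spec (X1 X2 : Type) (nu : subdist R (X1 + X2)) :
  ((exists x1, nu (inl x1) != 0) /\ gS nu = inl (resl nu)) \/
  ((forall x1, nu (inl x1) = 0) /\ gS nu = inr (resr nu)).
Proof.
case: (pselect (exists x1, nu (inl x1) != 0)) => H.
  by left; split => //; rewrite gS_l.
by right; split; [apply: not_ex_neq | rewrite gS_r].
Qed.

Lemma Q_E (Y1 Y2 : Type) (P : subdist R (subdist R (Y1 + Y2))) w :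
  mapS (@gS R Y1 Y2) P w = ssum (fun nu => if `[< gS nu = w >] then P nu else 0).
Proof. exact: mapS_E. Qed.

Lemma ML (Y1 Y2 : Type) (P : subdist R (subdist R (Y1 + Y2))) y1 :
  muS (resl (mapS (@gS R Y1 Y2) P)) y1 = muS P (inl y1).
Proof.
rewrite !muS_E.
transitivity (ssum (fun q : subdist R Y1 => ssum (fun nu => (if `[< gS nu = inl q >] then P nu * q y1 else 0)))).
  congr ssum; apply: funext => q; rewrite resl_E Q_E.
  rewrite [q y1]sd_fin -ssumZr; first last.
  - by move=> nu; case: ifP => // _; apply: sd_ge0.
  - by rewrite -lee_fin -sd_fin sd_ge0.
  by congr ssum; apply: funext => nu; case: ifP => // _; rewrite mul0e.
rewrite ssum_fubini; last first.
  by move=> q nu; case: ifP => // _; apply: mule_ge0; apply: sd_ge0.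
congr ssum; apply: funext => nu.
case: (gS_spec nu) => [[H ->]|[H ->]].
  rewrite -(resl_E nu y1); rewrite -(@ssum_dep_point _ (resl nu) (fun q => P nu * q y1)); last first.
    by apply: mule_ge0; apply: sd_ge0.
  congr ssum; apply: funext => q.
  by rewrite (@asbool_iff (inl (resl nu) = inl q) (resl nu = q)) //; split => [[]|->].
rewrite H mule0; apply: ssum0 => q; by rewrite asboolF.
Qed.

Lemma MR (Y1 Y2 : Type) (P : subdist R (subdist R (Y1 + Y2))) y2 :
  muS (resr (mapS (@gS R Y1 Y2) P)) y2 =
  ssum (fun nu => match gS nu with inl _ => 0 | inr _ => P nu * nu (inr y2) end).
Proof.
rewrite !muS_E.
transitivity (ssum (fun q : subdist R Y2 => ssum (fun nu => (if `[< gS nu = inr q >] then P nu * q y2 else 0)))).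
  congr ssum; apply: funext => q; rewrite resr_E Q_E.
  rewrite [q y2]sd_fin -ssumZr; first last.
  - by move=> nu; case: ifP => // _; apply: sd_ge0.
  - by rewrite -lee_fin -sd_fin sd_ge0.
  by congr ssum; apply: funext => nu; case: ifP => // _; rewrite mul0e.
rewrite ssum_fubini; last first.
  by move=> q nu; case: ifP => // _; apply: mule_ge0; apply: sd_ge0.
congr ssum; apply: funext => nu.
case: (gS_spec nu) => [[H ->]|[H ->]].
  apply: ssum0 => q; by rewrite asboolF.
rewrite -(resr_E nu y2); rewrite -(@ssum_dep_point _ (resr nu) (fun q => P nu * q y2)); last first.
  by apply: mule_ge0; apply: sd_ge0.
congr ssum; apply: funext => q.
by rewrite (@asbool_iff (inr (resr nu) = inr q) (resr nu = q)) //; split => [[]|->].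
Qed.

Lemma part3 (Y1 Y2 : Type) (P : subdist R (subdist R (Y1 + Y2))) :
  gS (muS P) = summap (@muS R Y1) (@muS R Y2) (gS (mapS (@gS R Y1 Y2) P)).
Proof.
pose C := exists nu : subdist R (Y1 + Y2), P nu != 0 /\ exists x1, nu (inl x1) != 0.
have nn : forall nu : subdist R (Y1 + Y2), forall z, 0 <= P nu * nu z.
  by move=> nu z; apply: mule_ge0; apply: sd_ge0.
have cA : (exists y1, muS P (inl y1) != 0) <-> C.
  split.
    move=> [y1]; rewrite muS_E => /ssum_neq0 [] // nu.
    by rewrite mule_eq0 negb_or => /andP [h1 h2]; exists nu; split => //; exists y1.
  move=> [nu [h1 [x1 h2]]]; exists x1; rewrite muS_E; apply/ssum_neq0 => //.
  by exists nu; rewrite mule_eq0 negb_or h1 h2.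
have cB : (exists q, mapS (@gS R Y1 Y2) P (inl q) != 0) <-> C.
  split.
    move=> [q]; rewrite Q_E => /ssum_neq0 [].
      by move=> nu; case: ifP => // _; apply: sd_ge0.
    move=> nu; case: ifP; last by rewrite eqxx.
    move=> /asboolP e h; exists nu; split => //.
    by case: (gS_spec nu) => [[]//|[_ e']]; rewrite e' in e.
  move=> [nu [h1 h2]]; exists (resl nu); rewrite Q_E; apply/ssum_neq0.
    by move=> nu'; case: ifP => // _; apply: sd_ge0.
  by exists nu; rewrite gS_l // asboolT.
case: (pselect C) => H.
  rewrite (@gS_l _ _ (muS P)); last by apply/cA.
  rewrite (@gS_l _ _ (mapS (@gS R Y1 Y2) P)); last by apply/cB.
  by congr inl; apply: subdist_ext => y1; rewrite resl_E ML.
rewrite (@gS_r _ _ (muS P)); last by move/cA.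
rewrite (@gS_r _ _ (mapS (@gS R Y1 Y2) P)); last by move/cB.
congr inr; apply: subdist_ext => y2; rewrite resr_E MR muS_E.
congr ssum; apply: funext => nu.
case: (gS_spec nu) => [[h ->]|[_ ->]] //.
case: (pselect (P nu = 0)) => [->|hP]; first by rewrite mul0e.
by exfalso; apply: H; exists nu; split => //; apply/eqP.
Qed.


Lemma V_ext (a b : V R) : proj1_sig a = proj1_sig b -> a = b.
Proof.
case: a => a ha; case: b => b hb /= e; subst b; congr exist; exact: Prop_irrelevance.
Qed.

Lemma massE (X1 X2 : Type) (h : X1 + X2 -> V R) (p : subdist R (X1 + X2)) v :
  mapS h p v = ssum (fun x1 => if `[< h (inl x1) = v >] then p (inl x1) else 0)
             + ssum (fun x2 => if `[< h (inr x2) = v >] then p (inr x2) else 0).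
Proof.
by rewrite mapS_E ssum_split //; move=> x; case: ifP => // _; apply: sd_ge0.
Qed.

Lemma mass_ge0 (X : Type) (h : X -> V R) (p : subdist R X) v : 0 <= mapS h p v.
Proof. exact: sd_ge0. Qed.

Lemma ev_infty (X1 X2 : Type) (h : X1 + X2 -> V R) (p : subdist R (X1 + X2)) x1 :
  h (inl x1) = vbot R -> p (inl x1) != 0 -> evS (mapS h p) = vbot R.
Proof.
move=> hx px; apply: V_ext => /=; apply/eqP; rewrite eq_le leey /=.
have nn : forall v : V R, 0 <= proj1_sig v * mapS h p v.
  by move=> v; apply: mule_ge0; [exact: (proj2_sig v) | apply: sd_ge0].
apply: le_trans (ssum_ge (vbot R) nn) => /=.
rewrite gt0_mulye //.
apply: (lt_le_trans _ (_ : p (inl x1) <= _)).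
  by rewrite lt_neqAle eq_sym px sd_ge0.
rewrite mapS_E; apply: le_trans (ssum_ge (inl x1) _).
  by rewrite asboolT.
by move=> x; case: ifP => // _; apply: sd_ge0.
Qed.

Lemma ssum0_if (T : Type) (P : T -> Prop) (a : T -> \bar R) :
  (forall x, a x = 0) -> ssum (fun x => if `[< P x >] then a x else 0) = 0.
Proof. by move=> h; apply: ssum0 => x; case: ifP. Qed.

Lemma ssum0_ifF (T : Type) (P : T -> Prop) (a : T -> \bar R) :
  (forall x, ~ P x) -> ssum (fun x => if `[< P x >] then a x else 0) = 0.
Proof. by move=> h; apply: ssum0 => x; rewrite asboolF. Qed.

Lemma part4 (X1 X2 : Type) (f1 : X1 -> V R) (f2 : X2 -> V R) :
      (forall p : subdist R (X1 + X2),
          evS (mapS (copair f1 (fun _ => vtop R)) p)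
          = copair (fun q => evS (mapS f1 q)) (fun _ => vtop R) (gS p)) /\
      (forall p : subdist R (X1 + X2),
          evS (mapS (copair (fun _ => vbot R) f2) p)
          = copair (fun _ => vbot R) (fun q => evS (mapS f2 q)) (gS p)) /\
      (forall p : subdist R (X1 + X2),
          evS (mapS (copair (fun _ => vbot R) (fun _ => vtop R)) p)
          = copair (fun _ => vbot R) (fun _ => vtop R) (gS p)).
Proof.
split; [|split].
- move=> p; case: (pselect (exists x1, p (inl x1) != 0)) => H.
    rewrite gS_l //=; apply: V_ext => /=; congr ssum; apply: funext => v.
    case: (pselect (v = vtop R)) => [->|hv]; first by rewrite /= !mul0e.
    congr (_ * _); rewrite massE mapS_E /= [X in _ + X]ssum0_ifF ?adde0.
      by congr ssum; apply: funext => x1; rewrite resl_E.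
    by move=> x2 e; apply: hv.
  rewrite gS_r //=; apply: V_ext => /=; apply: ssum0 => v.
  case: (pselect (v = vtop R)) => [->|hv]; first by rewrite /= !mul0e.
  rewrite massE /= [X in _ + X]ssum0_ifF ?adde0 ?ssum0_if ?mule0 //.
    by apply: not_ex_neq.
  by move=> x2 e; apply: hv.
- move=> p; case: (pselect (exists x1, p (inl x1) != 0)) => H.
    rewrite gS_l //=; case: H => x1 hx; exact: (ev_infty (x1 := x1)).
  rewrite gS_r //=; apply: V_ext => /=; congr ssum; apply: funext => v.
  congr (_ * _); rewrite massE mapS_E /= [X in X + _]ssum0_if ?add0e //.
    by congr ssum; apply: funext => x2; rewrite resr_E.
  by apply: not_ex_neq.
- move=> p; case: (pselect (exists x1, p (inl x1) != 0)) => H.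
    rewrite gS_l //=; case: H => x1 hx; exact: (ev_infty (x1 := x1)).
  rewrite gS_r //=; apply: V_ext => /=; apply: ssum0 => v.
  case: (pselect (v = vtop R)) => [->|hv]; first by rewrite /= !mul0e.
  rewrite massE /= [X in _ + X]ssum0_ifF ?adde0 ?ssum0_if ?mule0 //.
    by apply: not_ex_neq.
  by move=> x2 e; apply: hv.
Qed.

End H.

Unset Implicit Arguments.

Theorem mainTheorem13 (R : realType) :
  (* naturality *)
  (forall (X1 X2 Y1 Y2 : Type) (f1 : X1 -> Y1) (f2 : X2 -> Y2) (p : subdist R (X1 + X2)),
      gS (mapS (summap f1 f2) p) = summap (@mapS R _ _ f1) (@mapS R _ _ f2) (gS p)) /\
  (* compatibility with the unit *)
  (forall (Y1 Y2 : Type) (y : Y1 + Y2),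
      gS (@etaS R _ y) = summap (@etaS R Y1) (@etaS R Y2) y) /\
  (* compatibility with the multiplication *)
  (forall (Y1 Y2 : Type) (P : subdist R (subdist R (Y1 + Y2))),
      gS (muS P) = summap (@muS R Y1) (@muS R Y2) (gS (mapS (@gS R Y1 Y2) P))) /\
  (* well-behaved with respect to ev_S = E *)
  (forall (X1 X2 : Type) (f1 : X1 -> V R) (f2 : X2 -> V R),
      (forall p : subdist R (X1 + X2),
          evS (mapS (copair f1 (fun _ => vtop R)) p)
          = copair (fun q => evS (mapS f1 q)) (fun _ => vtop R) (gS p)) /\
      (forall p : subdist R (X1 + X2),
          evS (mapS (copair (fun _ => vbot R) f2) p)
          = copair (fun _ => vbot R) (fun q => evS (mapS f2 q)) (gS p)) /\
      (forall p : subdist R (X1 + X2),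
          evS (mapS (copair (fun _ => vbot R) (fun _ => vtop R)) p)
          = copair (fun _ => vbot R) (fun _ => vtop R) (gS p))).

Proof.
split; first exact: part1.
split; first exact: part2.
split; first exact: part3.
exact: part4.
Qed.
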